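(* Let $n\ge1$ and $1\le k\le n$ be integers. Then $$|\mathrm{SVT}((1^k),n)|=\binom{n}{k}\,{}_2F_1\!\left(\begin{matrix}k,\;k-n\\ k+1\end{matrix};-1\right).$$
   Context: Let $[n]=\{1,\dots,n\}$. For a partition $\lambda$ with at most $n$ nonzero parts, identified with its Young diagram $\{(i,j): 1\le j\le\lambda_i\}$ (row index $i$ increasing downward, column index $j$ to the right), a set-valued tableau of shape $\lambda$ with entries in $[n]$ assigns to every box $(i,j)$ a nonempty subset $T_{i,j}\subseteq[n]$ such that $\max T_{i,j}\le\min T_{i,j+1}$ and $\max T_{i,j}<\min T_{i+1,j}$ whenever these boxes exist; $\mathrm{SVT}(\lambda,n)$ is the set of these tableaux, and $(1^k)$ is the one-column partition with $k$ boxes. $(a)_0=1$, $(a)_m=a(a+1)\cdots(a+m-1)$, and ${}_2F_1\!\left(\begin{smallmatrix}a,\,b\\ c\end{smallmatrix};z\right)=\sum_{m\ge0}\frac{(a)_m(b)_m}{(c)_m}\frac{z^m}{m!}$, a finite sum when $b$ is a nonpositive integer. *)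

(* Defs.v *)
From mathcomp Require Import all_boot all_order all_algebra.
Set Implicit Arguments. Unset Strict Implicit. Unset Printing Implicit Defensive.
Import Order.TTheory GRing.Theory Num.Theory.

(* Boxes are 0-indexed: box (i,j) of the paper is (i-1, j-1) here.
   The entry alphabet [n] = {1..n} is represented by 'I_n (value v <-> v+1),
   an order-preserving relabelling. *)

Definition maxpart (la : seq nat) : nat := foldr maxn 0 la.

Definition in_diagram (la : seq nat) (i j : nat) : bool :=
  (i < size la) && (j < nth 0 la i).

Definition is_svt (la : seq nat) (n : nat)
  (T : {ffun 'I_(size la) * 'I_(maxpart la) -> {set 'I_n}}) : bool :=
  [forall b : 'I_(size la) * 'I_(maxpart la), if in_diagram la (b.1 : nat) (b.2 : nat) then T b != set0 else T b == set0] &&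
  [forall b1 : 'I_(size la) * 'I_(maxpart la), forall b2 : 'I_(size la) * 'I_(maxpart la),
     [&& in_diagram la b1.1 b1.2, in_diagram la b2.1 b2.2,
         (b1.1 : nat) == b2.1 & (b2.2 : nat) == (b1.2).+1] ==>
     [forall x in T b1, forall y in T b2, x <= y]] &&
  [forall b1 : 'I_(size la) * 'I_(maxpart la), forall b2 : 'I_(size la) * 'I_(maxpart la),
     [&& in_diagram la b1.1 b1.2, in_diagram la b2.1 b2.2,
         (b1.2 : nat) == b2.2 & (b2.1 : nat) == (b1.1).+1] ==>
     [forall x in T b1, forall y in T b2, x < y]].

Definition SVT (la : seq nat) (n : nat) :
  {set {ffun 'I_(size la) * 'I_(maxpart la) -> {set 'I_n}}} :=
  [set T | is_svt T].

Definition one_col (k : nat) : seq nat := nseq k 1%N.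

Local Open Scope ring_scope.

Definition poch (a : rat) (m : nat) : rat := \prod_(i < m) (a + i%:R).

(* 2F1(a, -N; c; z): the series sum_{m>=0} (a)_m (b)_m / (c)_m z^m / m! with
   b = -N a nonpositive integer; all terms with m > N vanish since (-N)_m = 0,
   so the sum is the finite sum over m = 0..N. *)
Definition hyp2F1_negb (a : rat) (N : nat) (c z : rat) : rat :=
  \sum_(m < N.+1) poch a m * poch (- N%:R) m / poch c m * z ^+ m / (m`!)%:R.

(* Main.v *)
Require Import Defs.
From mathcomp Require Import all_boot all_order all_algebra.
From mathcomp Require Import ring zify.
Set Implicit Arguments. Unset Strict Implicit. Unset Printing Implicit Defensive.
Fixpoint words (K n : nat) : seq (seq nat) :=
  if n is n'.+1 then [seq rcons w x | w <- words K n', x <- iota 0 K.+1]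
  else [:: [::]].

Lemma wordsS K n : words K n.+1 = [seq rcons w x | w <- words K n, x <- iota 0 K.+1].
Proof. by []. Qed.

Definition mono (a b : nat) : bool := (a == 0) || (b == 0) || (a <= b).

Definition Pp (k : nat) (w : seq nat) : bool :=
  [&& all (fun a => a <= k) w, pairwise mono w & all (fun c => c \in w) (iota 1 k)].

Lemma mem_words K n w : (w \in words K n) = (size w == n) && all (fun a => a <= K) w.
Proof.
elim: n w => [|n IH] w.
  by rewrite /= inE; case: w.
rewrite wordsS. apply/allpairsP/idP.
  case=> [[w' x]] /= [H1 H2 ->]; move: H1; rewrite IH => /andP[/eqP <- Ha].
  rewrite size_rcons eqxx all_rcons Ha andbT /=.
  by move: H2; rewrite -[0 :: _]/(iota 0 K.+1) mem_iota.
case/lastP: w => [|w x]; first by [].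
rewrite size_rcons all_rcons eqSS => /and3P[Hs Hx Ha].
exists (w, x); split=> //; first by rewrite IH Hs.
by rewrite mem_iota.
Qed.

Lemma words_uniq K n : uniq (words K n).
Proof.
elim: n => [|n IH] //.
rewrite wordsS. apply: allpairs_uniq => //; first exact: iota_uniq.
by move=> [a b] [c d] _ _ /= /rcons_inj.
Qed.

Lemma Pp_rcons0 k w : Pp k (rcons w 0) = Pp k w.
Proof.
rewrite /Pp all_rcons pairwise_rcons /=.
have -> : all (mono^~ 0) w by apply/allP => x _; rewrite /mono eqxx orbT.
congr (_ && (_ && _)).
apply: eq_in_all => c; rewrite mem_iota mem_rcons inE => /andP[c1 _].
by rewrite (negbTE (lt0n_neq0 c1)).
Qed.

Lemma Pp_rcons k w x : x != 0 -> Pp k (rcons w x) = (x == k) && (Pp k w || Pp k.-1 w).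
Proof.
move=> x0; rewrite /Pp all_rcons pairwise_rcons.
apply/idP/idP.
  case/and3P=> /andP[xk Ha] /andP[Hm Hp] Hc.
  have k0 : 0 < k by rewrite lt0n; apply: contra x0 => /eqP kz; rewrite -leqn0 -kz.
  have kin : k \in rcons w x by move/allP: Hc; apply; rewrite mem_iota k0 add1n ltnSn.
  have xe : x == k.
    rewrite mem_rcons inE in kin; case/orP: kin => [/eqP->//|kw].
    move/allP: Hm => /(_ k kw); rewrite /mono (negbTE x0) orbF [x == k]eqn_leq xk /=.
    by move/orP=> [/eqP k0'|//]; rewrite k0' in k0.
  rewrite xe /=; move/eqP: xe => xe; subst x.
  case kw: (k \in w).
    apply/orP; left; rewrite Ha Hp /=.
    apply/allP=> c cin; move/allP: Hc => /(_ c cin); rewrite mem_rcons inE.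
    by case/orP=> [/eqP->|].
  apply/orP; right; rewrite Hp /=; apply/andP; split.
    apply/allP=> a aw; move/allP: Ha => /(_ a aw) ak.
    have : a != k by apply/eqP=> ak'; rewrite -ak' aw in kw.
    by move=> ak2; rewrite -ltnS prednK // ltn_neqAle ak2 ak.
  apply/allP=> c; rewrite mem_iota => /andP[c1 ck].
  have : c \in rcons w k.
    by move/allP: Hc; apply; rewrite mem_iota c1 /=; move: ck; rewrite -(prednK k0) addnS ltnS add1n => /leqW.
  rewrite mem_rcons inE; case/orP=> [/eqP ce|//].
  by move: ck; rewrite ce add1n prednK // ltnn.
case/andP=> /eqP <- {k}.
have x1 : 0 < x by rewrite lt0n.
case/orP=> /and3P[Ha Hp Hc].
  rewrite leqnn Ha Hp /= andbT; apply/andP; split.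
    by apply/allP=> a aw; move/allP: Ha => /(_ a aw) ax; rewrite /mono ax !orbT.
  by apply/allP=> c cin; rewrite mem_rcons inE; move/allP: Hc => /(_ c cin) ->; rewrite orbT.
have Ha' : all (fun a => a <= x) w.
  by apply/allP=> a aw; move/allP: Ha => /(_ a aw) ax; apply: (leq_trans ax); apply: leq_pred.
rewrite leqnn Ha' Hp /= andbT; apply/andP; split.
  by apply/allP=> a aw; move/allP: Ha' => /(_ a aw) ax; rewrite /mono ax !orbT.
apply/allP=> c; rewrite mem_iota add1n ltnS => /andP[c1 cx]; rewrite mem_rcons inE.
case: (ltngtP c x) cx => // cx _.
apply/orP; right; move/allP: Hc; apply; rewrite mem_iota c1 add1n prednK //.
Qed.

Lemma Pp_excl k w : 0 < k -> Pp k w -> Pp k.-1 w = false.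
Proof.
move=> k0 /and3P[_ _ Hc]; apply/negP=> /and3P[Ha _ _].
have : k \in w by move/allP: Hc; apply; rewrite mem_iota k0 add1n ltnSn.
by move/(allP Ha); case: k k0 {Hc Ha} => // k _; rewrite ltnn.
Qed.

Lemma count_step K k w : k <= K ->
  count (fun x => Pp k (rcons w x)) (iota 0 K.+1) =
  Pp k w + (if 0 < k then Pp k w + Pp k.-1 w else 0).
Proof.
move=> kK; rewrite -[iota 0 K.+1]/(0 :: iota 1 K) /= Pp_rcons0; congr (_ + _).
rewrite (@eq_in_count _ _ (fun x => (x == k) && (Pp k w || Pp k.-1 w))); last first.
  by move=> x; rewrite mem_iota => /andP[x1 _]; rewrite Pp_rcons // -lt0n.
case: (ltnP 0 k) => k0.
  case Hk: (Pp k w).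
    rewrite (Pp_excl k0 Hk) /= addn0.
    rewrite (eq_count (a2 := pred1 k)); last by move=> x; rewrite andbT.
    by rewrite count_uniq_mem ?iota_uniq // mem_iota k0 add1n ltnS kK.
  case Hk1: (Pp k.-1 w) => /=.
    rewrite (eq_count (a2 := pred1 k)); last by move=> x; rewrite andbT.
    by rewrite count_uniq_mem ?iota_uniq // mem_iota k0 add1n ltnS kK.
  by rewrite (eq_count (a2 := pred0)) ?count_pred0 // => x; rewrite andbF.
rewrite (eq_in_count (a2 := pred0)) ?count_pred0 // => x.
by rewrite mem_iota; move: k0; rewrite leqn0 => /eqP -> /andP[x1 _]; case: x x1.
Qed.

Definition cnt K k n := count (Pp k) (words K n).

Lemma cntS K k n : k <= K ->
  cnt K k n.+1 = cnt K k n + (if 0 < k then cnt K k n + cnt K k.-1 n else 0).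
Proof.
move=> kK; rewrite /cnt wordsS; elim: (words K n) => [|w s IH].
  by case: ifP.
rewrite allpairs_cons count_cat count_map.
rewrite (eq_count (a2 := fun x => Pp k (rcons w x))) // count_step // IH /=.
case: ifP => _; last by rewrite !addn0.
lia.
Qed.

Fixpoint g (m k : nat) : nat :=
  match m, k with
  | 0, k => (k == 0 : nat)
  | m'.+1, 0 => 0
  | m'.+1, k'.+1 => g m' k'.+1 + g m' k'
  end.

Definition F (M n k : nat) := \sum_(m < M) 'C(n, m) * g m k.

Lemma F_ext M n k : n < M -> F M.+1 n k = F M n k.
Proof. by move=> nM; rewrite /F big_ord_recr /= bin_small // mul0n addn0. Qed.

Lemma F0 M n : F M.+1 n 0 = 1.
Proof.
rewrite /F big_ord_recl [nat_of_ord _]/= bin0 mul1n big1 // => i _.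
by rewrite /bump /= muln0.
Qed.

Lemma gS m k : g m.+1 k.+1 = g m k.+1 + g m k.
Proof. by []. Qed.

Lemma FS M n k : F M.+1 n.+1 k.+1 = F M.+1 n k.+1 + F M n k.+1 + F M n k.
Proof.
rewrite /F !big_ord_recl [nat_of_ord _]/= !muln0 !add0n.
have -> : \sum_(i < M) 'C(n.+1, (bump 0 i)) * g (bump 0 i) k.+1 =
   \sum_(i < M) ('C(n, (bump 0 i)) * g (bump 0 i) k.+1 + ('C(n, i) * g i k.+1 + 'C(n, i) * g i k)).
  by apply: eq_bigr => i _; rewrite (_ : bump 0 i = i.+1) // binS mulnDl; congr (_ + _); rewrite gS mulnDr.
by rewrite !big_split /= addnA.
Qed.

Lemma cnt_F K k n : k <= K -> cnt K k n = F n.+1 n k.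
Proof.
elim: n k => [|n IH] k kK.
  rewrite /cnt /= /F big_ord_recl big_ord0 addn0 bin0 mul1n /Pp /=.
  by case: k {kK}.
rewrite cntS //; case: k kK => [|k] kK /=.
  by rewrite addn0 IH // !F0.
rewrite FS F_ext // !IH //; last exact: ltnW.
by rewrite addnA.
Qed.


Lemma size_oc k : size (one_col k) = k.
Proof. by rewrite size_nseq. Qed.

Lemma mp_oc k : 0 < k -> maxpart (one_col k) = 1.
Proof. by case: k => // k _; elim: k => // k IH; rewrite /maxpart /= in IH *; rewrite IH. Qed.

Definition Box k := ('I_(size (one_col k)) * 'I_(maxpart (one_col k)))%type.

Definition mkbox k i (hi : i < k) (k0 : 0 < k) : Box k :=
  (Ordinal (leq_trans hi (eq_leq (esym (size_oc k)))),
   Ordinal (eq_leq (esym (mp_oc k0)))).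

Lemma box2 k (k0 : 0 < k) (b : Box k) : val b.2 = 0.
Proof. by case: b => [a [c /=]]; rewrite mp_oc //; case: c. Qed.

Lemma box_eq k (k0 : 0 < k) (b1 b2 : Box k) : val b1.1 = val b2.1 -> b1 = b2.
Proof.
move=> h; have h1 := box2 k0 b1; have h2 := box2 k0 b2.
case: b1 b2 h h1 h2 => [a1 c1] [a2 c2] /= h h1 h2.
by congr pair; apply: val_inj => //=; rewrite h1 h2.
Qed.

Lemma in_diag k (b : Box k) : in_diagram (one_col k) b.1 b.2.
Proof.
case: b => [a c] /=; rewrite /in_diagram ltn_ord /= nth_nseq.
have ha : a < k := leq_trans (ltn_ord a) (eq_leq (size_oc k)).
have k0 : 0 < k by apply: leq_ltn_trans ha.
by rewrite ha (leq_trans (ltn_ord c) (eq_leq (mp_oc k0))).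
Qed.

Lemma svt_ne k n (T : {ffun Box k -> {set 'I_n}}) : is_svt T -> forall b, T b != set0.
Proof.
case/andP=> /andP[/forallP HA _] _ b.
by move: (HA b); rewrite in_diag.
Qed.

Lemma svt_vert k n (T : {ffun Box k -> {set 'I_n}}) : 0 < k -> is_svt T ->
  forall (b1 b2 : Box k) x y, val b2.1 = (val b1.1).+1 -> x \in T b1 -> y \in T b2 -> x < y.
Proof.
move=> k0 /andP[_ /forallP HV] b1 b2 x y h xin yin.
move: (HV b1) => /forallP /(_ b2) /implyP.
rewrite !in_diag (box2 k0 b1) (box2 k0 b2) h !eqxx => /(_ isT) /forallP /(_ x) /implyP /(_ xin).
by move/forallP /(_ y) /implyP /(_ yin).
Qed.

Lemma svt_lt k n (T : {ffun Box k -> {set 'I_n}}) : 0 < k -> is_svt T ->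
  forall (b1 b2 : Box k) x y, val b1.1 < val b2.1 -> x \in T b1 -> y \in T b2 -> x < y.
Proof.
move=> k0 HT b1 b2 x y h.
have [d hd] : exists d, val b2.1 = val b1.1 + d.+1.
  by exists (val b2.1 - (val b1.1).+1); rewrite addnS -addSn subnKC.
elim: d b1 x hd {h} => [|d IH] b1 x hd xin yin.
  by apply: (svt_vert k0 HT) xin yin; rewrite hd addn1.
have hm : (val b1.1).+1 < k.
  apply: leq_trans (eq_leq (size_oc k)); apply: leq_trans (ltn_ord b2.1).
  rewrite hd; lia.
set m := mkbox hm k0.
have /set0Pn [z zin] := svt_ne HT m.
have xz : x < z by apply: (svt_vert k0 HT) xin zin.
apply: ltn_trans xz _; apply: (IH m) zin yin.
by rewrite hd /= addnS addSn.
Qed.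

Lemma svt_disj k n (T : {ffun Box k -> {set 'I_n}}) : 0 < k -> is_svt T ->
  forall (b1 b2 : Box k) x, x \in T b1 -> x \in T b2 -> b1 = b2.
Proof.
move=> k0 HT b1 b2 x h1 h2.
case: (ltngtP (val b1.1) (val b2.1)) => h.
- by have := svt_lt k0 HT h h1 h2; rewrite ltnn.
- by have := svt_lt k0 HT h h2 h1; rewrite ltnn.
- exact: box_eq.
Qed.

Definition lab k n (T : {ffun Box k -> {set 'I_n}}) (x : 'I_n) : nat :=
  if [pick b | x \in T b] is Some b then (val b.1).+1 else 0.

Lemma lab_in k n (T : {ffun Box k -> {set 'I_n}}) : 0 < k -> is_svt T ->
  forall b x, (x \in T b) = (lab T x == (val b.1).+1).
Proof.
move=> k0 HT b x; rewrite /lab; case: pickP => [b' Hb'|H].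
  rewrite eqSS; apply/idP/eqP => [xin|h].
    by rewrite (svt_disj k0 HT Hb' xin).
  by rewrite -(box_eq k0 h).
by rewrite H.
Qed.

Definition phi k n (T : {ffun Box k -> {set 'I_n}}) := map (lab T) (enum 'I_n).

Lemma lab_le k n (T : {ffun Box k -> {set 'I_n}}) x : lab T x <= k.
Proof.
rewrite /lab; case: pickP => // b _.
exact: leq_trans (ltn_ord b.1) (eq_leq (size_oc k)).
Qed.

Lemma phi_words k n (T : {ffun Box k -> {set 'I_n}}) : phi T \in words k n.
Proof.
rewrite mem_words /phi size_map size_enum_ord eqxx /=.
by apply/allP=> c /mapP[x _ ->]; apply: lab_le.
Qed.

Lemma phi_Pp k n (T : {ffun Box k -> {set 'I_n}}) : 0 < k -> is_svt T -> Pp k (phi T).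
Proof.
move=> k0 HT; rewrite /Pp; apply/and3P; split.
- by apply/allP=> c /mapP[x _ ->]; apply: lab_le.
- rewrite /phi pairwise_map; apply: (@sub_pairwise _ (relpre val ltn)).
    move=> x y /= xy; rewrite /mono /lab.
    case: pickP => [b1 H1|_]; last by [].
    case: pickP => [b2 H2|_]; last by rewrite orbT.
    rewrite /= ltnS leqNgt; apply/negP => h.
    by have := svt_lt k0 HT h H2 H1; rewrite ltnNge ltnW.
  by rewrite -pairwise_map val_enum_ord -sorted_pairwise ?iota_ltn_sorted //; exact: ltn_trans.
- apply/allP=> c; rewrite mem_iota add1n ltnS; case: c => // c /= ck.
  have /set0Pn [z zin] := svt_ne HT (mkbox ck k0).
  apply/mapP; exists z; first by rewrite mem_enum.
  rewrite (lab_in k0 HT) in zin; by rewrite (eqP zin).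
Qed.

Definition Tw k n (w : seq nat) : {ffun Box k -> {set 'I_n}} :=
  [ffun b : Box k => [set x : 'I_n | nth 0 w x == (val b.1).+1]].

Lemma Tw_svt k n w : 0 < k -> w \in words k n -> Pp k w -> is_svt (@Tw k n w).
Proof.
move=> k0; rewrite mem_words => /andP[/eqP sw aw] /and3P[_ pw cw].
apply/andP; split; [apply/andP; split|].
- apply/forallP => b; rewrite in_diag; apply/set0Pn.
  have cin : (val b.1).+1 \in w.
    move/allP: cw; apply; rewrite mem_iota add1n ltnS /=.
    exact: leq_trans (ltn_ord b.1) (eq_leq (size_oc k)).
  have hi : index (val b.1).+1 w < n by rewrite -sw index_mem.
  by exists (Ordinal hi); rewrite ffunE inE /= nth_index.
- apply/forallP => b1; apply/forallP => b2; apply/implyP => /and4P[_ _ _].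
  by rewrite (box2 k0 b1) (box2 k0 b2).
- apply/forallP => b1; apply/forallP => b2; apply/implyP => /and4P[_ _ _ /eqP h].
  apply/forallP => x; apply/implyP; rewrite ffunE inE => /eqP hx.
  apply/forallP => y; apply/implyP; rewrite ffunE inE => /eqP hy.
  rewrite ltnNge; apply/negP => yx.
  case: (ltngtP (val y) (val x)) yx => // [yx _|yxe _].
    move/(pairwiseP 0): pw => /(_ y x).
    rewrite !inE sw !ltn_ord => /(_ isT isT yx).
    by rewrite /mono hx hy /= h ltnn.
  have e : nat_of_ord y = nat_of_ord x by []. move: hy; rewrite e hx /= h => /eqP. by rewrite eqSS (ltn_eqF (ltnSn _)).
Qed.

Lemma phi_Tw k n w : 0 < k -> w \in words k n -> phi (@Tw k n w) = w.
Proof.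
move=> k0; rewrite mem_words => /andP[/eqP sw aw].
apply: (@eq_from_nth _ 0); first by rewrite size_map size_enum_ord sw.
move=> i; rewrite size_map size_enum_ord => hi.
rewrite (nth_map (Ordinal hi)) ?size_enum_ord //.
set xo := nth _ _ _.
have hxo : nat_of_ord xo = i by rewrite /xo nth_enum_ord.
rewrite /lab; case: pickP => [b|H].
  by rewrite ffunE inE hxo => /eqP ->.
case c: (nth 0 w i) => [//|c'].
have hc : c' < k.
  have : nth 0 w i \in w by rewrite mem_nth // sw.
  by move/(allP aw); rewrite c.
by have := H (mkbox hc k0); rewrite ffunE inE /= hxo c eqxx.
Qed.

Lemma phi_inj k n (T1 T2 : {ffun Box k -> {set 'I_n}}) : 0 < k -> is_svt T1 -> is_svt T2 ->
  phi T1 = phi T2 -> T1 = T2.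
Proof.
move=> k0 H1 H2 /eq_in_map he.
apply/ffunP => b; apply/setP => x.
by rewrite (lab_in k0 H1) (lab_in k0 H2) he // mem_enum.
Qed.

Lemma card_SVT k n : 0 < k -> #|SVT (one_col k) n| = cnt k k n.
Proof.
move=> k0; rewrite /cnt -size_filter cardE -(size_map (@phi k n)).
apply: perm_size; apply: uniq_perm.
- rewrite map_inj_in_uniq ?enum_uniq // => T1 T2.
  rewrite !mem_enum !inE => H1 H2; exact: phi_inj.
- exact: filter_uniq (words_uniq _ _).
move=> w; apply/mapP/idP.
  by case=> T; rewrite mem_enum inE => HT ->; rewrite mem_filter phi_Pp // phi_words.
rewrite mem_filter => /andP[Pw ww]; exists (@Tw k n w).
  by rewrite mem_enum inE; apply: Tw_svt.
by rewrite phi_Tw.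
Qed.

Import Order.TTheory GRing.Theory Num.Theory.

Lemma g_val m k : g m.+1 k.+1 = 'C(m, k).
Proof.
elim: m k => [|m IH] k; first by case: k.
rewrite gS IH; case: k => [|k]; first by case: m {IH}.
by rewrite IH binS.
Qed.

Lemma g_small m k : m < k -> g m k = 0.
Proof.
case: m => [|m]; first by case: k.
case: k => // k; rewrite ltnS => mk; rewrite g_val bin_small //.
Qed.

Lemma bin_prod n k j : 'C(n, k) * 'C(n - k, j) = 'C(n, j + k) * 'C(j + k, k).
Proof.
case: (leqP (j + k) n) => jkn; last first.
  rewrite (bin_small jkn) mul0n.
  case: (ltnP n k) => nk; first by rewrite bin_small.
  rewrite (@bin_small (n - k) j) ?muln0 //; lia.
have kn : k <= n by apply: leq_trans jkn; apply: leq_addl.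
have jnk : j <= n - k by rewrite leq_subRL // addnC.
apply/eqP; rewrite -(@eqn_pmul2r (k`! * (j`! * (n - k - j)`!))); last first.
  by rewrite !muln_gt0 !fact_gt0.
have E1 : 'C(n, k) * 'C(n - k, j) * (k`! * (j`! * (n - k - j)`!)) = n`!.
  rewrite -(bin_fact kn) -(bin_fact jnk); ring.
have E2 : 'C(n, j + k) * 'C(j + k, k) * (k`! * (j`! * (n - k - j)`!)) = n`!.
  have F1 : 'C(j + k, k) * (k`! * j`!) = (j + k)`!.
    by rewrite -(bin_fact (leq_addl j k)) addnK.
  have F2 := bin_fact jkn.
  have F3 : n - k - j = n - (j + k) by rewrite addnC subnDA.
  rewrite F3 -F2 -F1; ring.
by rewrite E1 E2.
Qed.

Local Open Scope ring_scope.

Lemma pochS a j : poch a j.+1 = poch a j * (a + j%:R).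
Proof. by rewrite /poch big_ord_recr. Qed.

Lemma poch_gt0 a j : 0 < a -> 0 < poch a j.
Proof.
move=> a0; elim: j => [|j IH]; first by rewrite /poch big_ord0.
by rewrite pochS mulr_gt0 // ltr_wpDr.
Qed.

Lemma poch_ratio (k j : nat) : poch k%:R j * (k + j)%:R = k%:R * poch (k + 1)%:R j.
Proof.
elim: j => [|j IH]; first by rewrite /poch !big_ord0 addn0 mulr1 mul1r.
rewrite !pochS mulrA -IH -!mulrA; congr (_ * _); rewrite -!natrD.
by congr (_ * _%:R); lia.
Qed.

Lemma poch_neg (N j : nat) : poch (- N%:R) j * (-1) ^+ j = (j`!)%:R * ('C(N, j))%:R.
Proof.
elim: j => [|j IH]; first by rewrite /poch big_ord0 mulr1 bin0 mul1r.
rewrite pochS exprS.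
have -> : poch (- N%:R) j * (- N%:R + j%:R) * (-1 * (-1) ^+ j) =
   (poch (- N%:R) j * (-1) ^+ j) * (N%:R - j%:R) by ring.
rewrite IH factS natrM.
case: (leqP j N) => jN.
  rewrite -natrB // -mulrA -!natrM; congr (_%:R); rewrite [(_ * (N - j))%N]mulnC -mul_bin_left; ring.
rewrite !bin_small ?mulr0 ?mul0r //; exact: ltnW.
Qed.

Lemma term_eq (n k j : nat) : (k < n.+1)%N ->
  (('C(n, j + k.+1) * g (j + k.+1) k.+1)%N)%:R =
  ('C(n, k.+1))%:R * (poch k.+1%:R j * poch (- (n - k.+1)%:R) j / poch (k.+1 + 1)%:R j * (-1) ^+ j / (j`!)%:R) :> rat.
Proof.
move=> kn.
set N := (n - k.+1)%N.
set P := poch (k.+1 + 1)%:R j.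
have P0 : P != 0 by rewrite gt_eqF // poch_gt0.
have f0 : (j`!)%:R != 0 :> rat by rewrite pnatr_eq0 -lt0n fact_gt0.
have kj0 : (k.+1 + j)%:R != 0 :> rat by rewrite pnatr_eq0 addSn.
have H1 : poch k.+1%:R j = k.+1%:R * P / (k.+1 + j)%:R.
  by rewrite -poch_ratio mulfK.
set s := (-1) ^+ j : rat.
have hs : s * s = 1 by rewrite /s -exprMn mulrNN mulr1 expr1n.
have H2 : poch (- N%:R) j = (j`!)%:R * ('C(N, j))%:R * s.
  by rewrite -poch_neg -mulrA hs mulr1.
rewrite H1 H2 addnS g_val.
rewrite (_ : _ * (_ * _ / _ * _ / _) = ('C(n, k.+1) * k.+1 * 'C(N, j))%N%:R / (k.+1 + j)%:R * (s * s)); last first.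
  rewrite !natrM; field; rewrite f0 P0 andbT.
  by rewrite andbT; move: kj0; rewrite natrD mulrS.
rewrite hs mulr1.
have E : ('C(n, k.+1) * k.+1 * 'C(N, j) = 'C(n, (j + k).+1) * 'C(j + k, k) * (k.+1 + j))%N.
  have B := bin_prod n k.+1 j.
  have D := mul_bin_diag (j + k.+1) k.
  rewrite addnS /= in B D.
  rewrite (_ : ('C(n, k.+1) * k.+1 * 'C(N, j) = k.+1 * ('C(n, k.+1) * 'C(N, j)))%N); last by ring.
  rewrite /N B mulnA [(k.+1 * _)%N]mulnC -mulnA -D; ring.
by rewrite E [in RHS]natrM mulfK // natrM.
Qed.

Lemma F_hyp n k : (1 <= k)%N -> (k <= n)%N ->
  (F n.+1 n k)%:R = ('C(n, k))%:R * hyp2F1_negb k%:R (n - k) (k + 1)%:R (-1) :> rat.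
Proof.
case: k => // k _ kn.
rewrite /F -(big_mkord xpredT (fun m => 'C(n, m) * g m k.+1%N)) (big_cat_nat (n := k.+1)) //=; last exact: ltnW.
rewrite big_nat_cond big1 ?add0n; last first.
  move=> i /andP[/andP[_ ik] _]; rewrite g_small //; exact: (muln0 _).
rewrite -{1}(add0n k.+1) big_addn big_mkord subSn //.
rewrite natr_sum /hyp2F1_negb mulr_sumr; apply: eq_bigr => j _.
exact: (term_eq j (leqW kn)).
Qed.

Theorem corollary3p4 (n k : nat) :
  (1 <= n)%N -> (1 <= k)%N -> (k <= n)%N ->
  (#|SVT (one_col k) n|%:R : rat) =
    ('C(n, k))%:R * hyp2F1_negb k%:R (n - k) (k + 1)%:R (-1).
Proof.
move=> n1 k1 kn.
by rewrite card_SVT // cnt_F // F_hyp.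
Qed.
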